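(* Let $\mathbb{F}$ be an infinite field (e.g. $\mathbb{R}$ or $\mathbb{C}$). Let $n\ge 1$, let $L_1,\dots,L_n\ge 1$ be integers, and put $N=\prod_{i=1}^n L_i$ and $P_i=\prod_{k=1}^{i-1}L_k$ (so $P_1=1$). Consider the sliced-contraction setting described in the context with $m_i=2$ for every $i$: finite-dimensional $\mathbb{F}$-vector spaces $V_{i,1},V_{i,2}$ ($i=1,\dots,n$), $W$, a multilinear map $\Phi: V_{1,1}\times V_{1,2}\times\cdots\times V_{n,1}\times V_{n,2}\to W$, and sliced tensors $A^{(i,j)}_{s}\in V_{i,j}$ for $s=1,\dots,L_i$, with target $$\sigma_{\mathrm{final}}=\sum_{s_1=1}^{L_1}\cdots\sum_{s_n=1}^{L_n}\Phi\big(A^{(1,1)}_{s_1},A^{(1,2)}_{s_1},\dots,A^{(n,1)}_{s_n},A^{(n,2)}_{s_n}\big).$$ For $x\in\mathbb{F}$ define the encoded tensors $$\tilde A^{(i,1)}(x)=\sum_{s=1}^{L_i}A^{(i,1)}_{s}\,x^{(s-1)P_i},\qquad \tilde A^{(i,2)}(x)=\sum_{s=1}^{L_i}A^{(i,2)}_{s}\,x^{(L_i-s)P_i},$$ and $g(x)=\Phi\big(\tilde A^{(1,1)}(x),\tilde A^{(1,2)}(x),\dots,\tilde A^{(n,1)}(x),\tilde A^{(n,2)}(x)\big)$. Then $g(x)=\sum_{e=0}^{2(N-1)}c_e x^e$ is a polynomial with coefficients $c_e\in W$ of degree at most $2(N-1)$, and its coefficient of $x^{N-1}$ is $c_{N-1}=\sigma_{\mathrm{final}}$.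 Consequently, for every integer $f\ge 0$, the scheme with $K=f+2N-1$ workers, worker $k$ computing $g(x_k)$ for pairwise distinct $x_1,\dots,x_K\in\mathbb{F}$, allows the master to recover $\sigma_{\mathrm{final}}$ from the outputs of any $K-f=2N-1$ workers. Hence the $f$-resilient number $f+2\prod_{i=1}^nL_i-1$ is achievable, and the gain compared to naive replication is $\Delta=N(f+1)-(f+2N-1)=\big(\prod_{i=1}^nL_i-1\big)(f-1)$.
   Context: Setting (sliced parallel tensor network contraction). A tensor network is contracted in parallel by ''slicing'' $n$ of its closed indices: index $i$ has dimension $L_i$ and is shared by $m_i$ tensors (an ''$m_i$-node index''), and the sliced indices are pairwise non-adjacent, i.e. no tensor carries two sliced indices. Fixing the value $s_i\in\{1,\dots,L_i\}$ of each sliced index turns each of the $m_i$ tensors attached to index $i$ into a sliced subtensor $A^{(i,j)}_{s_i}\in V_{i,j}$ ($j=1,\dots,m_i$), and contracting the rest of the network (all tensors not attached to sliced indices, together with all non-sliced indices) is a multilinear map $\Phi:\prod_{i=1}^n\prod_{j=1}^{m_i}V_{i,j}\to W$. The sliced partition for $(s_1,\dots,s_n)$ is $\sigma_{s_1\cdots s_n}=\Phi(A^{(1,1)}_{s_1},\dots,A^{(1,m_1)}_{s_1},\dots,A^{(n,1)}_{s_n},\dots,A^{(n,m_n)}_{s_n})$, and the desired output is $\sigma_{\mathrm{final}}=\sum_{s_1,\dots,s_n}\sigma_{s_1\cdots s_n}$; there are $N=\prod_i L_i$ sliced partitions. Computing model: a master distributes work to workers; each worker evaluates $\Phi$ once on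 one input from each $V_{i,j}$ (so it has the same computational cost as computing one sliced partition) and returns the result; up to $f$ workers may fail, and nothing is recovered from a failed worker. The $f$-resilient number of a scheme is the total number of workers required so that $\sigma_{\mathrm{final}}$ can be retrieved despite any $f$ worker failures. Naive replication (each of the $N$ sliced partitions computed by $f+1$ workers) has $f$-resilient number $N(f+1)$; the gain of a scheme is $N(f+1)$ minus its $f$-resilient number. *)

(* Defs.v *)
From HB Require Import structures.
From mathcomp Require Import all_boot all_order all_algebra.
Set Implicit Arguments. Unset Strict Implicit. Unset Printing Implicit Defensive.
Import GRing.Theory.
Local Open Scope ring_scope.

(* Index set of the 2n sliced subtensors: pairs (i, j), i < n, j < 2
   (0-based; j = 0 stands for the paper's j = 1, j = 1 for j = 2). *)
Definition idx (n : nat) := ('I_n * 'I_2)%type.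

Definition multilinear (F : fieldType) (I : finType) (V : I -> vectType F)
  (W : vectType F) (Phi : (forall p, V p) -> W) : Prop :=
  forall (a : forall p, V p) (p : I) (c : F) (u v : V p),
    Phi (dfwith a (c *: u + v)) = c *: Phi (dfwith a u) + Phi (dfwith a v).

Definition Nsl (n : nat) (L : 'I_n -> nat) : nat := (\prod_(i < n) L i)%N.

Definition Psl (n : nat) (L : 'I_n -> nat) (i : 'I_n) : nat :=
  (\prod_(k < n | (k < i)%N) L k)%N.

(* Exponent of x multiplying the slice s (0-based, s = paper's s - 1):
   j = 0 : (s-1) P_i  ~> s * P_i ;  j = 1 : (L_i - s) P_i ~> (L_i - 1 - s) * P_i *)
Definition expo (n : nat) (L : 'I_n -> nat) (i : 'I_n) (j : 'I_2) (s : nat) : nat :=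
  if j == 0 then (s * Psl L i)%N else ((L i - 1 - s) * Psl L i)%N.

Definition enc (F : fieldType) (n : nat) (L : 'I_n -> nat)
  (V : idx n -> vectType F) (A : forall p : idx n, 'I_(L p.1) -> V p) (x : F)
  : forall p : idx n, V p :=
  fun p => \sum_(s < L p.1) x ^+ (expo L p.1 p.2 s) *: A p s.

Definition gpoly (F : fieldType) (n : nat) (L : 'I_n -> nat)
  (V : idx n -> vectType F) (W : vectType F) (Phi : (forall p : idx n, V p) -> W)
  (A : forall p : idx n, 'I_(L p.1) -> V p) (x : F) : W :=
  Phi (enc A x).

Definition sigma_final (F : fieldType) (n : nat) (L : 'I_n -> nat)
  (V : idx n -> vectType F) (W : vectType F) (Phi : (forall p : idx n, V p) -> W)
  (A : forall p : idx n, 'I_(L p.1) -> V p) : W :=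
  \sum_(t : {dffun forall i : 'I_n, 'I_(L i)}) Phi (fun p => A p (t p.1)).

(* Main.v *)
Require Import Defs.
From HB Require Import structures.
From mathcomp Require Import all_boot all_order all_algebra.
From mathcomp Require Import zify.
From Stdlib Require Import FunctionalExtensionality.
Import GRing.Theory.
Local Open Scope ring_scope.



Definition Pn (l : nat -> nat) (k : nat) : nat := (\prod_(j < k) l j)%N.

Lemma Pn_gt0 l k : (forall j, (j < k)%N -> (0 < l j)%N) -> (0 < Pn l k)%N.
Proof.
move=> h; rewrite /Pn prodn_gt0 // => j; exact: h.
Qed.

Lemma tele l m : (forall j, (j < m)%N -> (0 < l j)%N) ->
  (\sum_(k < m) (l k).-1 * Pn l k)%N = (Pn l m).-1.
Proof.
elim: m => [|m IH] h; first by rewrite big_ord0 /Pn big_ord0.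
rewrite big_ord_recr /= IH; last by move=> j hj; apply: h; lia.
have hp : (0 < Pn l m)%N by apply: Pn_gt0 => j hj; apply: h; lia.
have hl : (0 < l m)%N by apply: h.
rewrite /Pn big_ord_recr /= -/(Pn l m).
move: hp hl; set P := Pn l m; set a := l m => hp hl.
rewrite -(prednK hp) -(prednK hl) /=; nia.
Qed.

Lemma bnd l m u : (forall j, (j < m)%N -> (u j < l j)%N) ->
  (\sum_(k < m) u k * Pn l k <= (Pn l m).-1)%N.
Proof.
move=> h; rewrite -tele; last by move=> j /h; lia.
apply: leq_sum => k _; apply: leq_mul => //; have := h k (ltn_ord k); lia.
Qed.

Lemma digits l m u v : (forall j, (j < m)%N -> (u j < l j)%N) ->
  (forall j, (j < m)%N -> (v j < l j)%N) ->
  (\sum_(k < m) u k * Pn l k)%N = (\sum_(k < m) v k * Pn l k)%N ->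
  forall j, (j < m)%N -> u j = v j.
Proof.
elim: m => [|m IH] hu hv; first by [].
rewrite !big_ord_recr /=.
have hp : (0 < Pn l m)%N by apply: Pn_gt0 => j hj; have := hu j; lia.
have bu := @bnd l m u (fun j hj => hu j (ltnW hj)).
have bv := @bnd l m v (fun j hj => hv j (ltnW hj)).
move=> E.
have Em : u m = v m.
  have := congr1 (fun z => z %/ Pn l m)%N E => /=.
  rewrite ![(_ + _ * _)%N]addnC !divnMDl // !divn_small ?addn0 //.
  - by apply: leq_ltn_trans bv _; rewrite prednK.
  - by apply: leq_ltn_trans bu _; rewrite prednK.
move: E; rewrite Em => /addIn E j hj.
case: (ltngtP j m) => [hjm||->] //; last lia.
apply: IH => // k hk; [apply: hu | apply: hv]; lia.
Qed.



Section ML.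
Variables (F : fieldType) (I : finType) (V : I -> vectType F) (W : vectType F).
Variables (Phi : (forall p, V p) -> W) (hPhi : multilinear Phi).

Lemma ml0 a p : Phi (dfwith a (0 : V p)) = 0.
Proof.
have := hPhi a p 1 0 0; rewrite scale1r addr0 scale1r => h.
have := congr1 (fun z => z - Phi (dfwith a (0 : V p))) h.
by rewrite subrr addrK => <-.
Qed.

Lemma mlD a p (u v : V p) : Phi (dfwith a (u + v)) = Phi (dfwith a u) + Phi (dfwith a v).
Proof. by have := hPhi a p 1 u v; rewrite !scale1r. Qed.

Lemma mlZ a p c (u : V p) : Phi (dfwith a (c *: u)) = c *: Phi (dfwith a u).
Proof. by have := hPhi a p c u 0; rewrite !addr0 ml0 addr0. Qed.

Lemma mlsum a p (J : finType) (f : J -> V p) :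
  Phi (dfwith a (\sum_j f j)) = \sum_j Phi (dfwith a (f j)).
Proof.
apply: (big_morph (fun u => Phi (dfwith a u))); first exact: mlD.
exact: ml0.
Qed.

Definition updf (J : I -> finType) (t : {dffun forall p, J p}) q (s : J q)
  : {dffun forall p, J p} := finfun (dfwith (fun p => t p) s).
Arguments updf {J} t q s.

Lemma updfE (J : I -> finType) (t : {dffun forall p, J p}) q (s : J q) p :
  updf t q s p = dfwith (fun p => t p) s p.
Proof. by rewrite /updf ffunE. Qed.

Lemma expand (J : I -> finType) (y : forall p, J p -> V p) (t0 : forall p, J p)
  (r : seq I) : uniq r -> forall z : forall p, V p,
  Phi (fun p => if p \in r then \sum_(s : J p) y p s else z p) =
  \sum_(t : {dffun forall p, J p} | [forall p, (p \notin r) ==> (t p == t0 p)])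
     Phi (fun p => if p \in r then y p (t p) else z p).
Proof.
elim: r => [|q r IH] /=.
  move=> _ z.
  rewrite (big_pred1 (finfun t0 : {dffun forall p, J p})).
    by congr Phi; apply: functional_extensionality_dep => p.
  move=> t /=; apply/forallP/eqP => [h|->].
    by apply/ffunP => p; rewrite ffunE; apply/eqP; exact: h.
  by move=> p; rewrite ffunE.
case/andP => qr ur z.
set w := fun p => if p \in r then \sum_(s : J p) y p s else z p.
have -> : (fun p => if p \in q :: r then \sum_(s : J p) y p s else z p)
          = dfwith w (\sum_(s : J q) y q s).
  apply: functional_extensionality_dep => p.
  case: dfwithP => [|p' hq]; first by rewrite mem_head.
  by rewrite in_cons eq_sym (negPf hq).
have E : forall s : J q, Phi (dfwith w (y q s)) =
  \sum_(t : {dffun forall p, J p} | [forall p, (p \notin r) ==> (t p == t0 p)])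
     Phi (fun p => if p \in r then y p (t p) else dfwith z (y q s) p).
  move=> s; rewrite -IH //; congr Phi.
  apply: functional_extensionality_dep => p.
  case: dfwithP => [|p' hq]; first by rewrite (negPf qr) dfwith_in.
  by rewrite /w dfwith_out.
rewrite mlsum (eq_bigr _ (fun s _ => E s)).
rewrite [RHS](partition_big (fun t : {dffun forall p, J p} => t q) xpredT) //=.
apply: eq_bigr => s _.
rewrite [RHS](reindex_onto (fun t => updf t q s) (fun t => updf t q (t0 q))).
  symmetry; apply: eq_big => t.
    apply/idP/idP.
      case/andP=> /andP[/forallP h1 _] /eqP h2.
      apply/forallP => p; apply/implyP => pr.
      case: (eqVneq q p) => [<-|qp].
        by rewrite -h2 updfE dfwith_in.
      by have := implyP (h1 p); rewrite in_cons eq_sym (negPf qp) pr updfE dfwith_out //; apply.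
    move/forallP => h; apply/andP; split; [apply/andP; split|].
    - apply/forallP => p; apply/implyP; rewrite in_cons negb_or => /andP[qp pr].
      rewrite updfE dfwith_out; [exact: (implyP (h p) pr) | by rewrite eq_sym].
    - by rewrite updfE dfwith_in.
    - apply/eqP/ffunP => p; rewrite !updfE.
      case: dfwithP => [|p' qp]; last by rewrite /= updfE dfwith_out.
      by apply/esym/eqP; exact: (implyP (h q) qr).
  move=> _; congr Phi; apply: functional_extensionality_dep => p.
  rewrite updfE in_cons.
  case: dfwithP => [|p' qp].
    by rewrite eqxx /= (negPf qr) dfwith_in.
  rewrite eq_sym (negPf qp) /=; case: ifP => // _.
  by rewrite dfwith_out.
move=> t /andP[_ /eqP <-].
apply/ffunP => p; rewrite !updfE.
case: dfwithP => [|p' qp]; first by [].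
by rewrite /= updfE dfwith_out.
Qed.

Lemma scaleall (c : I -> F) (r : seq I) : uniq r -> forall v : forall p, V p,
  Phi (fun p => if p \in r then c p *: v p else v p) = (\prod_(p <- r) c p) *: Phi v.
Proof.
elim: r => [|q r IH] /=.
  by move=> _ v; rewrite big_nil scale1r; congr Phi; apply: functional_extensionality_dep.
case/andP => qr ur v.
set w := fun p => if p \in r then c p *: v p else v p.
have -> : (fun p => if p \in q :: r then c p *: v p else v p) = dfwith w (c q *: v q).
  apply: functional_extensionality_dep => p.
  case: dfwithP => [|p' hq]; first by rewrite mem_head.
  by rewrite in_cons eq_sym (negPf hq).
rewrite mlZ.
have -> : dfwith w (v q) = w.
  apply: functional_extensionality_dep => p.
  case: dfwithP => [|p' hq] //.
  by rewrite /w (negPf qr).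
by rewrite IH // big_cons scalerA.
Qed.

Lemma expand_scaled (J : I -> finType) (a : forall p, J p -> F)
  (B : forall p, J p -> V p) (t0 : forall p, J p) :
  Phi (fun p => \sum_(s : J p) a p s *: B p s) =
  \sum_(t : {dffun forall p, J p}) (\prod_p a p (t p)) *: Phi (fun p => B p (t p)).
Proof.
have H := @expand J (fun p s => a p s *: B p s) t0 (enum I) (enum_uniq _) (fun p => 0).
rewrite -[LHS]/(Phi (fun p => \sum_(s : J p) a p s *: B p s)).
have -> : (fun p => \sum_(s : J p) a p s *: B p s) = (fun p =>
   if p \in enum I then \sum_(s : J p) a p s *: B p s else (fun p => 0) p).
  by apply: functional_extensionality_dep => p; rewrite mem_enum.
rewrite H.
apply: eq_big => [t|t _].
  by apply/forallP => p; rewrite mem_enum.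
have H2 := @scaleall (fun p => a p (t p)) (enum I) (enum_uniq _) (fun p => B p (t p)).
rewrite big_enum /= in H2; rewrite -H2; congr Phi.
by apply: functional_extensionality_dep => p; rewrite mem_enum.
Qed.

End ML.



Section Key.
Variables (n : nat) (L : 'I_n.+1 -> nat) (L_ge1 : forall i, (1 <= L i)%N).
Let l := fun k => L (inord k).

Lemma PslE (i : 'I_n.+1) : Psl L i = Pn l i.
Proof.
rewrite /Psl /Pn [RHS](big_ord_widen_cond n.+1 xpredT l (ltnW (ltn_ord i))).
by apply: eq_bigr => j _; rewrite /l inord_val.
Qed.

Lemma NslE : Nsl L = Pn l n.+1.
Proof. by rewrite /Nsl /Pn; apply: eq_bigr => j _; rewrite /l inord_val. Qed.

Lemma expo0 (i : 'I_n.+1) s : expo L i ord0 s = (s * Psl L i)%N.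
Proof. by []. Qed.

Lemma expo1 (i : 'I_n.+1) s : expo L i ord_max s = ((L i - 1 - s) * Psl L i)%N.
Proof. by []. Qed.

Lemma Ekey (t : {dffun forall p : idx n.+1, 'I_(L p.1)}) :
 let E := (\sum_(p : idx n.+1) expo L p.1 p.2 (t p))%N in
 (E <= 2 * (Nsl L - 1))%N /\
 ((E == Nsl L - 1)%N = [forall i : 'I_n.+1, (t (i, ord0) : nat) == t (i, ord_max)]).
Proof.
move=> E.
set u := fun k => (t (inord k, ord0) : nat).
set v := fun k => (t (inord k, ord_max) : nat).
have lpos : forall j, (j < n.+1)%N -> (0 < l j)%N by move=> j _; exact: L_ge1.
have hu : forall j, (j < n.+1)%N -> (u j < l j)%N by move=> j _; exact: ltn_ord.
have hv : forall j, (j < n.+1)%N -> (v j < l j)%N by move=> j _; exact: ltn_ord.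
have EE : E = (\sum_(i < n.+1) u i * Pn l i + \sum_(i < n.+1) (l i - 1 - v i) * Pn l i)%N.
  rewrite /E -big_split /=.
  have -> : (\sum_(p : idx n.+1) expo L p.1 p.2 (t p) =
     \sum_(i < n.+1) \sum_(j < 2) expo L i j (t (i, j)))%N.
    by rewrite pair_bigA; apply: eq_bigr => -[i j].
  apply: eq_bigr => i _.
  rewrite !big_ord_recl big_ord0 addn0 /=.
  have -> : lift ord0 ord0 = ord_max :> 'I_2 by apply: val_inj.
  by rewrite expo0 expo1 PslE /u /v /l inord_val.
have VV : (\sum_(i < n.+1) v i * Pn l i + \sum_(i < n.+1) (l i - 1 - v i) * Pn l i
           = (Pn l n.+1).-1)%N.
  rewrite -big_split -tele //; apply: eq_bigr => i _ /=.
  rewrite -mulnDl; congr (_ * _)%N; have := hv i (ltn_ord i); lia.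
have bu := @bnd l n.+1 u hu.
have bv := @bnd l n.+1 v hv.
rewrite NslE subn1; split; first lia.
apply/eqP/forallP => [h i|h].
  have Euv : (\sum_(i < n.+1) u i * Pn l i)%N = (\sum_(i < n.+1) v i * Pn l i)%N by lia.
  have := @digits l n.+1 u v hu hv Euv i (ltn_ord i).
  by rewrite /u /v inord_val => ->.
have Euv : (\sum_(i < n.+1) u i * Pn l i)%N = (\sum_(i < n.+1) v i * Pn l i)%N.
  by apply: eq_bigr => i _; rewrite /u /v inord_val (eqP (h i)).
lia.
Qed.
End Key.



Theorem theorem1 (F : fieldType)
  (F_infinite : forall s : seq F, exists x : F, x \notin s)
  (n : nat) (n_ge1 : (1 <= n)%N)
  (L : 'I_n -> nat) (L_ge1 : forall i, (1 <= L i)%N) :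
  (* g is a polynomial of degree <= 2(N-1) whose coefficient of x^(N-1) is sigma_final *)
  (forall (V : idx n -> vectType F) (W : vectType F)
          (Phi : (forall p : idx n, V p) -> W),
      multilinear Phi ->
      forall A : forall p : idx n, 'I_(L p.1) -> V p,
      exists c : 'I_(2 * (Nsl L - 1)).+1 -> W,
        (forall x : F, gpoly Phi A x = \sum_(e < (2 * (Nsl L - 1)).+1) x ^+ e *: c e)
        /\ c (inord (Nsl L - 1)) = sigma_final Phi A)
  /\
  (* recovery from any K - f = 2N - 1 of the K = f + 2N - 1 workers *)
  (forall (f K : nat), K = (f + 2 * Nsl L - 1)%N ->
   forall xs : 'I_K -> F, injective xs ->
   forall S : {set 'I_K}, #|S| = (K - f)%N ->
   forall W : vectType F,
   exists dec : ('I_K -> W) -> W,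
     forall (V : idx n -> vectType F) (Phi : (forall p : idx n, V p) -> W),
       multilinear Phi ->
       forall A : forall p : idx n, 'I_(L p.1) -> V p,
         dec (fun k => if k \in S then gpoly Phi A (xs k) else 0)
         = sigma_final Phi A)
  /\
  (* gain over naive replication *)
  (forall f : nat,
     (Nsl L * (f + 1))%:Z - (f + 2 * Nsl L - 1)%:Z
     = ((Nsl L)%:Z - 1) * (f%:Z - 1)).
Proof.
case: n n_ge1 L L_ge1 => [//|n] _ L L_ge1.
have Npos : (0 < Nsl L)%N by rewrite /Nsl prodn_gt0.
set D := (2 * (Nsl L - 1)).+1.
have DN : (Nsl L - 1 < D)%N by rewrite /D; lia.
have P1 : forall (V : idx n.+1 -> vectType F) (W : vectType F)
          (Phi : (forall p : idx n.+1, V p) -> W),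
      multilinear Phi ->
      forall A : forall p : idx n.+1, 'I_(L p.1) -> V p,
      exists c : 'I_D -> W,
        (forall x : F, gpoly Phi A x = \sum_(e < D) x ^+ e *: c e)
        /\ c (inord (Nsl L - 1)) = sigma_final Phi A.
  move=> V W Phi hPhi A.
  pose E (t : {dffun forall p : idx n.+1, 'I_(L p.1)}) :=
    (\sum_(p : idx n.+1) expo L p.1 p.2 (t p))%N.
  have ED : forall t, (E t < D)%N.
    by move=> t; have [h _] := @Ekey n L L_ge1 t; rewrite /D ltnS.
  pose c (e : 'I_D) := \sum_(t : {dffun forall p : idx n.+1, 'I_(L p.1)} | E t == e)
      Phi (fun p => A p (t p)).
  exists c; split.
    move=> x; rewrite /gpoly /enc.
    rewrite (@expand_scaled F (idx n.+1) V W Phi hPhi (fun p => 'I_(L p.1))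
       (fun p s => x ^+ expo L p.1 p.2 s) A (fun p => Ordinal (L_ge1 p.1))).
    under eq_bigr do rewrite prodrXr.
    rewrite (partition_big (fun t => (inord (E t) : 'I_D)) xpredT) //=.
    apply: eq_bigr => e _; rewrite /c scaler_sumr.
    apply: eq_big => t.
      by rewrite -val_eqE /= inordK.
    by move=> /eqP <-; rewrite inordK.
  rewrite /c /sigma_final /= inordK //.
  rewrite (reindex_onto
     (fun t' : {dffun forall i : 'I_n.+1, 'I_(L i)} =>
        (finfun (fun p : idx n.+1 => t' p.1) : {dffun forall p : idx n.+1, 'I_(L p.1)}))
     (fun t : {dffun forall p : idx n.+1, 'I_(L p.1)} =>
        (finfun (fun i : 'I_n.+1 => t (i, ord0)) : {dffun forall i : 'I_n.+1, 'I_(L i)}))).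
    apply: eq_big => t'.
      have [_ ->] := @Ekey n L L_ge1 (finfun (fun p : idx n.+1 => t' p.1)).
      apply/andP; split.
        by apply/forallP => i; rewrite !ffunE.
      by apply/eqP/ffunP => i; rewrite !ffunE.
    by move=> _; congr Phi; apply: functional_extensionality_dep => p; rewrite ffunE.
  move=> t; have [_ ->] := @Ekey n L L_ge1 t => /forallP h.
  apply/ffunP => -[i j]; rewrite !ffunE /=.
  have [->|->] : j = ord0 \/ j = ord_max.
    by case: j => -[|[|j]] hj; [left; apply: val_inj | right; apply: val_inj | ].
    by [].
  by apply: val_inj; exact: (eqP (h i)).
split.
  move=> V W Phi hPhi A; have [c [h1 h2]] := P1 V W Phi hPhi A.
  by exists c.
split; last first.
  move=> f; lia.
move=> f K HK xs inj S hS W.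
have hm : D = #|S| by rewrite hS HK /D; lia.
pose h (j : 'I_D) : 'I_K := enum_val (cast_ord hm j).
have hinj : injective h.
  by move=> j1 j2 /enum_val_inj /cast_ord_inj.
pose a : 'rV[F]_D := \row_j xs (h j).
pose M := Vandermonde D a.
have uM : M \in unitmx.
  rewrite unitmxE unitfE det_Vandermonde; apply/prodf_neq0 => i _.
  apply/prodf_neq0 => j ij; rewrite subr_eq0 !mxE; apply/eqP => /inj /hinj eji.
  by move: ij; rewrite eji ltnn.
pose delta : 'cV[F]_D := \col_i ((i : nat) == (Nsl L - 1)%N)%:R.
pose lam := invmx M *m delta.
have Mlam : M *m lam = delta by rewrite mulKVmx.
exists (fun y => \sum_(j < D) lam j 0 *: y (h j)).
move=> V Phi hPhi A; have [c [hc1 hc2]] := P1 V W Phi hPhi A.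
transitivity (\sum_(j < D) lam j 0 *: \sum_(e < D) xs (h j) ^+ e *: c e).
  apply: eq_bigr => j _.
  have -> : h j \in S by exact: enum_valP.
  by rewrite hc1.
rewrite -hc2.
have key : forall e : 'I_D, \sum_(j < D) lam j 0 *: (xs (h j) ^+ e *: c e)
   = ((e : nat) == (Nsl L - 1)%N)%:R *: c e.
  move=> e; have := congr1 (fun m : 'M[F]_(D,1) => m e 0) Mlam; rewrite !mxE => <-.
  rewrite scaler_suml; apply: eq_bigr => j _.
  by rewrite /M /Vandermonde !mxE scalerA mulrC.
under eq_bigr do rewrite scaler_sumr.
rewrite exchange_big /= (eq_bigr _ (fun e _ => key e)).
rewrite (bigD1 (inord (Nsl L - 1))) //= inordK // eqxx scale1r big1 ?addr0 // => e ne.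
by rewrite -val_eqE /= inordK // in ne; rewrite (negPf ne) scale0r.
Qed.
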